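(* Let $s$ be a positive integer, let $\lambda,\eta,n$ be numbers (e.g. reals), and put $c(x)=\lambda x+\eta$. Then $$\sum_{i=0}^{s-1}(-1)^i\binom{s-1}{i}c(n-i)^s+\sum_{i=s+1}^{2s}(-1)^{s+i}\binom{s-1}{2s-i}c(n-i)^s=\lambda^s(s+1)!.$$ *)

(* Defs.v *)
From mathcomp Require Import all_boot all_order all_algebra.
Set Implicit Arguments. Unset Strict Implicit. Unset Printing Implicit Defensive.

(* Main.v *)
Require Import Defs.
From mathcomp Require Import all_boot all_order all_algebra.
From mathcomp Require Import ring zify.
Import GRing.Theory Num.Theory.
Local Open Scope ring_scope.

Definition Dm {R : comNzRingType} (lam : R) (m : nat) (f : R -> R) (y : R) : R :=
  \sum_(0 <= i < m.+1) (-1) ^+ i * ('C(m, i))%:R * f (y - i%:R * lam).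

Definition Df {R : comNzRingType} (lam : R) (f : R -> R) (y : R) : R :=
  f y - f (y - lam).

Lemma Dm_ext (R : comNzRingType) (lam : R) m f g y :
  (forall z, f z = g z) -> Dm lam m f y = Dm lam m g y.
Proof. by move=> e; apply: eq_bigr => i _; rewrite e. Qed.

Lemma Dm_sum (R : comNzRingType) (lam : R) m K (F : nat -> R -> R) y :
  Dm lam m (fun z => \sum_(0 <= j < K) F j z) y = \sum_(0 <= j < K) Dm lam m (F j) y.
Proof.
rewrite /Dm; under eq_bigr do rewrite mulr_sumr; exact: exchange_big.
Qed.

Lemma Dm_scale (R : comNzRingType) (lam : R) m a f y :
  Dm lam m (fun z => a * f z) y = a * Dm lam m f y.
Proof. rewrite /Dm mulr_sumr; apply: eq_bigr => i _; ring. Qed.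

Lemma Dm_sub (R : comNzRingType) (lam : R) m f g y :
  Dm lam m (fun z => f z - g z) y = Dm lam m f y - Dm lam m g y.
Proof. rewrite /Dm -sumrB; apply: eq_bigr => i _; ring. Qed.

Lemma Dm_shift (R : comNzRingType) (lam : R) m a f y :
  Dm lam m (fun z => f (z - a)) y = Dm lam m f (y - a).
Proof.
apply: eq_bigr => i _; congr (_ * f _); ring.
Qed.

Lemma Dm_S (R : comNzRingType) (lam : R) m f y :
  Dm lam m.+1 f y = Dm lam m (Df lam f) y.
Proof.
pose F := fun i : nat => f (y - i%:R * lam).
pose a := fun k i : nat => (-1) ^+ i * ('C(k, i))%:R : R.
have E1 : Dm lam m.+1 f y = \sum_(0 <= i < m.+2) a m.+1 i * F i by [].
have E2 : Dm lam m (Df lam f) y =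
   \sum_(0 <= i < m.+1) a m i * F i - \sum_(0 <= i < m.+1) a m i * F i.+1.
  rewrite -sumrB; apply: eq_bigr => i _; rewrite /Df /a /F.
  have -> : y - i%:R * lam - lam = y - i.+1%:R * lam by rewrite -natr1; ring.
  ring.
have S1 : \sum_(0 <= i < m.+2) a m i * F i = a m 0%N * F 0%N + \sum_(0 <= i < m.+1) a m i.+1 * F i.+1.
  by rewrite big_nat_recl.
have S2 : \sum_(0 <= i < m.+2) a m i * F i = \sum_(0 <= i < m.+1) a m i * F i.
  by rewrite big_nat_recr //= /a bin_small // mulr0 mul0r addr0.
rewrite E1 E2 big_nat_recl //.
have -> : \sum_(0 <= i < m.+1) a m.+1 i.+1 * F i.+1 =
   \sum_(0 <= i < m.+1) a m i.+1 * F i.+1 - \sum_(0 <= i < m.+1) a m i * F i.+1.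
  rewrite -sumrB; apply: eq_bigr => i _; rewrite /a binS natrD exprS; ring.
have h0 : a m.+1 0%N = 1 by rewrite /a bin0 expr0 mulr1.
have h0' : a m 0%N = 1 by rewrite /a bin0 expr0 mulr1.
rewrite h0; rewrite h0' in S1; move: S1; rewrite S2 => ->; ring.
Qed.

Lemma Df_pow (R : comNzRingType) (lam : R) k y :
  Df lam (fun z => z ^+ k.+1) y =
  \sum_(0 <= j < k.+1) (- ((-lam) ^+ (k.+1 - j) * ('C(k.+1, j))%:R)) * y ^+ j.
Proof.
rewrite /Df (addrC y) exprDn big_ord_recr /= subnn binn expr0 mul1r mulr1n big_mkord.
rewrite (_ : forall a b : R, b - (a + b) = - a); last by move=> a b; ring.
rewrite -sumrN; apply: eq_bigr => i _.
rewrite -mulr_natr; ring.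
Qed.

Lemma Dm_pow (R : comNzRingType) (lam : R) m :
  (forall k y, (k < m)%N -> Dm lam m (fun z => z ^+ k) y = 0) /\
  (forall y, Dm lam m (fun z => z ^+ m) y = (m`!)%:R * lam ^+ m).
Proof.
elim: m => [|m [IH1 IH2]].
  split=> // y; rewrite /Dm big_nat1 /= !expr0 !mulr1.
  by [].
have key : forall k y, (k <= m.+1)%N -> Dm lam m.+1 (fun z => z ^+ k) y =
   if k == m.+1 then (m.+1`!)%:R * lam ^+ m.+1 else 0.
  move=> [|k] y hk; rewrite Dm_S.
    rewrite (@Dm_ext _ lam m _ (fun z => 0 * z) y); last by move=> z; rewrite /Df !expr0 subrr mul0r.
    by rewrite Dm_scale mul0r.
  rewrite (@Dm_ext _ lam m _ _ y (fun z => Df_pow _ lam k z)) Dm_sum.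
  under eq_bigr do rewrite Dm_scale.
  case: (eqVneq k m) => [->|hkm].
    rewrite eqxx big_nat_recr //= IH2 big1_seq ?add0r; last first.
      move=> j; rewrite mem_index_iota => /andP[_ hj]; rewrite IH1 ?mulr0 //.
    rewrite subSnn binSn factS natrM expr1 exprS; ring.
  have hkm' : (k < m)%N by lia.
  rewrite ifN; last by apply/eqP; lia.
  rewrite big1_seq // => j; rewrite mem_index_iota => /andP[_ hj]; rewrite IH1 ?mulr0 //; lia.
split.
  by move=> k y hk; rewrite key ?ifN //; [apply/eqP; lia | lia].
by move=> y; rewrite key ?eqxx.
Qed.

Lemma tele (R : comNzRingType) (lam : R) f z K :
  f z - f (z - K%:R * lam) = \sum_(0 <= j < K) Df lam f (z - j%:R * lam).
Proof.
elim: K => [|K IH]; first by rewrite big_geq // mul0r subr0 subrr.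
rewrite big_nat_recr //= -IH /Df.
have -> : z - K.+1%:R * lam = z - K%:R * lam - lam by rewrite -natr1; ring.
ring.
Qed.

Theorem proposition9 (R : realFieldType) (s : nat) (hs : (0 < s)%N)
  (lambda eta n : R) :
  let c := fun x : R => lambda * x + eta in
  \sum_(0 <= i < s) (-1) ^+ i * ('C(s.-1, i))%:R * c (n - i%:R) ^+ s
  + \sum_(s.+1 <= i < (2 * s).+1) (-1) ^+ (s + i) * ('C(s.-1, 2 * s - i))%:R
      * c (n - i%:R) ^+ s
  = lambda ^+ s * (s.+1)`!%:R.
Proof.
move=> c; case: s hs => [//|m] _ /=.
set y := lambda * n + eta.
pose f := fun z : R => z ^+ m.+1.
have E1 : \sum_(0 <= i < m.+1) (-1) ^+ i * ('C(m, i))%:R * c (n - i%:R) ^+ m.+1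
    = Dm lambda m f y.
  apply: eq_bigr => i _; rewrite /f /c /y; congr (_ * _ ^+ _); ring.
have E2 : \sum_(m.+2 <= i < (2 * m.+1).+1) (-1) ^+ (m.+1 + i) * ('C(m, 2 * m.+1 - i))%:R
      * c (n - i%:R) ^+ m.+1 = - Dm lambda m f (y - m.+2%:R * lambda).
  rewrite -(add0n m.+2) big_addn.
  have -> : ((2 * m.+1).+1 - m.+2 = m.+1)%N by lia.
  rewrite /Dm -sumrN; apply: eq_big_nat => i /andP[_ hi].
  have -> : (m.+1 + (i + m.+2) = i.+1 + 2 * m.+1)%N by lia.
  have -> : (2 * m.+1 - (i + m.+2) = m - i)%N by lia.
  rewrite bin_sub; last by lia.
  rewrite exprD exprM sqrrN expr1n expr1n mulr1 exprS /f /c /y natrD.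
  have -> : lambda * (n - (i%:R + m.+2%:R)) + eta = lambda * n + eta - m.+2%:R * lambda - i%:R * lambda by ring.
  ring.
rewrite E1 E2 -Dm_shift -Dm_sub.
rewrite (@Dm_ext _ lambda m _ _ y (fun z => tele _ lambda f z m.+2)) Dm_sum.
under eq_bigr do rewrite Dm_shift -Dm_S (proj2 (Dm_pow _ lambda m.+1)).
rewrite sumr_const_nat subn0 -mulr_natr (factS m.+1) natrM; ring.
Qed.
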